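(* Under the standing assumptions below, there exists a unique constant $\eta\in(0,1)$ such that for every $\mathbf v\in\mathbb R_0^{N}$, $$\eta\, \mathrm{d}I_1(\mathbf v)+(1-\eta)\,\mathrm{d}I_2(\mathbf v)=0 .$$
   Context: Let $\mathcal X=\{1,\dots,N\}$ and $\mathcal Y$ be finite alphabets and $W_1,W_2$ transition probability matrices from $\mathcal X$ to $\mathcal Y$. For a distribution $P$ on $\mathcal X$ let $PW_k(y)=\sum_x P(x)W_k(y|x)$, $I_k(P)=\sum_x P(x)D(W_k(\cdot|x)\|PW_k)$ (mutual information, natural logarithms), $\imath_{P,W_k}(x;y)=\log\frac{W_k(y|x)}{PW_k(y)}$, and $V_k(P)=\sum_x P(x)\,\mathrm{Var}[\imath_{P,W_k}(x;Y_k)]$ where $Y_k\sim W_k(\cdot|x)$. Let $C=\max_P\min_{k\in\{1,2\}}I_k(P)$ and $C_k=\max_P I_k(P)$. Standing assumptions: the maximizer $P^*$ of $P\mapsto\min_k I_k(P)$ is unique; $P^*(x)>0$ for all $x$; $V_k(P^* )>0$ for $k=1,2$; $C_k>C$ for $k=1,2$. Let $P^*_{Y_k}=P^*W_k$, let $\mathbb R_0^N$ be the set of vectors in $\mathbb R^N$ whose entries sum to zero, and for $\mathbf v\in\mathbb R_0^N$ define $\mathrm{d}I_k(\mathbf v)=\sum_{x\in\mathcal X}v_x D(W_k(\cdot|x)\|P^*_{Y_k})$ (the directional derivative of $I_k$ at $P^*$ along $\mathbf v$). *)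

(* Defs.v *)
From Stdlib Require Import Reals List.
Open Scope R_scope.

(* Alphabets: X = {0,...,N-1} (the paper's {1,...,N} shifted by one),
   Y = {0,...,M-1}.  Channels W : nat -> nat -> R, W x y = W(y|x).
   Distributions / vectors are functions nat -> R, only entries < N matter. *)

Definition sumR (n : nat) (f : nat -> R) : R :=
  fold_right Rplus 0 (map f (seq 0 n)).

Definition is_channel (N M : nat) (W : nat -> nat -> R) : Prop :=
  (forall x y, (x < N)%nat -> (y < M)%nat -> 0 <= W x y) /\
  (forall x, (x < N)%nat -> sumR M (fun y => W x y) = 1).

Definition is_dist (N : nat) (P : nat -> R) : Prop :=
  (forall x, (x < N)%nat -> 0 <= P x) /\ sumR N P = 1.

Definition outd (N : nat) (W : nat -> nat -> R) (P : nat -> R) (y : nat) : R :=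
  sumR N (fun x => P x * W x y).

Definition idens (N : nat) (W : nat -> nat -> R) (P : nat -> R) (x y : nat) : R :=
  ln (W x y / outd N W P y).

Definition KLrow (M : nat) (W : nat -> nat -> R) (x : nat) (Q : nat -> R) : R :=
  sumR M (fun y => if Req_EM_T (W x y) 0 then 0 else W x y * ln (W x y / Q y)).

Definition MI (N M : nat) (W : nat -> nat -> R) (P : nat -> R) : R :=
  sumR N (fun x => if Req_EM_T (P x) 0 then 0 else P x * KLrow M W x (outd N W P)).

Definition condvar (N M : nat) (W : nat -> nat -> R) (P : nat -> R) (x : nat) : R :=
  let m := sumR M (fun y => if Req_EM_T (W x y) 0 then 0 else W x y * idens N W P x y) in
  sumR M (fun y => if Req_EM_T (W x y) 0 then 0
                   else W x y * (idens N W P x y - m) ^ 2).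

Definition dispersion (N M : nat) (W : nat -> nat -> R) (P : nat -> R) : R :=
  sumR N (fun x => P x * condvar N M W P x).

Definition dI (N M : nat) (W : nat -> nat -> R) (Pstar : nat -> R) (v : nat -> R) : R :=
  sumR N (fun x => v x * KLrow M W x (outd N W Pstar)).

(* Main.v *)
Require Import Defs.
From Stdlib Require Import Reals List Lra Lia.
Open Scope R_scope.

Lemma fold_plus_acc (l : list R) a : fold_right Rplus a l = fold_right Rplus 0 l + a.
Proof. induction l as [|h l IH]; simpl; [lra|rewrite IH; lra]. Qed.

Lemma sumR_S n f : sumR (S n) f = sumR n f + f n.
Proof.
  unfold sumR. rewrite List.seq_S, map_app, fold_right_app. simpl.
  rewrite fold_plus_acc. lra.
Qed.

Lemma sumR_0 f : sumR 0 f = 0.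
Proof. reflexivity. Qed.

Lemma sumR_ext n f g : (forall i, (i < n)%nat -> f i = g i) -> sumR n f = sumR n g.
Proof.
  induction n; intros H; [reflexivity|]. rewrite !sumR_S, IHn, H; auto; lia.
Qed.

Lemma sumR_le n f g : (forall i, (i < n)%nat -> f i <= g i) -> sumR n f <= sumR n g.
Proof.
  induction n; intros H; [rewrite !sumR_0; lra|]. rewrite !sumR_S.
  assert (sumR n f <= sumR n g) by (apply IHn; intros; apply H; lia).
  assert (f n <= g n) by (apply H; lia). lra.
Qed.

Lemma sumR_plus n f g : sumR n (fun i => f i + g i) = sumR n f + sumR n g.
Proof. induction n; [rewrite !sumR_0; lra|]. rewrite !sumR_S, IHn. lra. Qed.

Lemma sumR_minus n f g : sumR n (fun i => f i - g i) = sumR n f - sumR n g.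
Proof. induction n; [rewrite !sumR_0; lra|]. rewrite !sumR_S, IHn. lra. Qed.

Lemma sumR_scal n c f : sumR n (fun i => c * f i) = c * sumR n f.
Proof. induction n; [rewrite !sumR_0; lra|]. rewrite !sumR_S, IHn. lra. Qed.

Lemma sumR_zero n : sumR n (fun _ => 0) = 0.
Proof. induction n; [reflexivity|]. rewrite sumR_S, IHn. lra. Qed.

Lemma sumR_swap n m (F : nat -> nat -> R) :
  sumR n (fun i => sumR m (fun j => F i j)) = sumR m (fun j => sumR n (fun i => F i j)).
Proof.
  induction n.
  - rewrite sumR_0. symmetry. apply sumR_zero.
  - rewrite sumR_S, IHn, <- sumR_plus. apply sumR_ext. intros. rewrite sumR_S. reflexivity.
Qed.

Lemma sumR_nonneg n f : (forall i, (i < n)%nat -> 0 <= f i) -> 0 <= sumR n f.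
Proof. intros H. rewrite <- (sumR_zero n). apply sumR_le. auto. Qed.

Lemma sumR_ge_term n f k : (forall i, (i < n)%nat -> 0 <= f i) -> (k < n)%nat -> f k <= sumR n f.
Proof.
  induction n; intros H Hk; [lia|]. rewrite sumR_S.
  destruct (Nat.eq_dec k n) as [->|Hne].
  - assert (0 <= sumR n f) by (apply sumR_nonneg; intros; apply H; lia). lra.
  - assert (f k <= sumR n f) by (apply IHn; [intros; apply H; lia| lia]).
    assert (0 <= f n) by (apply H; lia). lra.
Qed.

Lemma sumR_min n f : (forall i, (i < n)%nat -> 0 < f i) ->
  exists m, 0 < m /\ forall i, (i < n)%nat -> m <= f i.
Proof.
  induction n; intros H.
  - exists 1. split; [lra|]. intros; lia.
  - destruct IHn as [m [Hm Hi]]; [intros; apply H; lia|].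
    exists (Rmin m (f n)). split.
    + apply Rmin_case; auto; apply H; lia.
    + intros i Hi'. destruct (Nat.eq_dec i n) as [->|Hne]; [apply Rmin_r|].
      eapply Rle_trans; [apply Rmin_l|]. apply Hi. lia.
Qed.

Lemma ln_div' a b : 0 < a -> 0 < b -> ln (a / b) = ln a - ln b.
Proof.
  intros. unfold Rdiv. rewrite ln_mult, ln_Rinv; auto; try lra; apply Rinv_0_lt_compat; auto.
Qed.

Lemma ln_le_sub1 z : 0 < z -> ln z <= z - 1.
Proof.
  intros Hz. pose proof (exp_ineq1_le (ln z)). rewrite exp_ln in H; auto. lra.
Qed.

Lemma outd_nonneg N M W P y : is_channel N M W -> (forall x, (x < N)%nat -> 0 <= P x) ->
  (y < M)%nat -> 0 <= outd N W P y.
Proof.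
  intros [HW _] HP Hy. unfold outd. apply sumR_nonneg. intros i Hi.
  apply Rmult_le_pos; auto.
Qed.

Lemma outd_pos N M W P x y : is_channel N M W -> (forall x, (x < N)%nat -> 0 <= P x) ->
  (x < N)%nat -> (y < M)%nat -> 0 < P x -> 0 < W x y -> 0 < outd N W P y.
Proof.
  intros [HW _] HP Hx Hy Hpx Hw. unfold outd.
  eapply Rlt_le_trans; [|apply (sumR_ge_term N (fun x => P x * W x y) x)]; auto.
  - apply Rmult_lt_0_compat; auto.
  - intros; apply Rmult_le_pos; auto.
Qed.

Lemma outd_zero N M W P y : is_channel N M W -> (forall x, (x < N)%nat -> 0 < P x) ->
  (y < M)%nat -> outd N W P y = 0 -> forall x, (x < N)%nat -> W x y = 0.
Proof.
  intros HC HP Hy H0 x Hx. destruct HC as [HW HS] eqn:E.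
  pose proof (HW x y Hx Hy). destruct H; auto. exfalso.
  assert (0 < outd N W P y). { eapply outd_pos; eauto. intros; left; auto. }
  lra.
Qed.

Lemma outd_sum N M W P : is_channel N M W -> is_dist N P -> sumR M (outd N W P) = 1.
Proof.
  intros [HW HS] [HP1 HP2]. unfold outd.
  rewrite <- (sumR_swap N M (fun x y => P x * W x y)).
  rewrite <- HP2. apply sumR_ext. intros i Hi. rewrite sumR_scal, HS; auto. ring.
Qed.

Lemma upper N M W Ps P : is_channel N M W -> (forall x, (x < N)%nat -> 0 < Ps x) ->
  is_dist N Ps -> is_dist N P -> MI N M W P <= dI N M W Ps P.
Proof.
  intros HC Hpos HPs HP.
  pose proof HC as [HW HS]. pose proof HP as [HP1 HP2].
  set (Q := outd N W Ps). set (R := outd N W P).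
  assert (step : forall x, (x < N)%nat ->
    (if Req_EM_T (P x) 0 then 0 else P x * KLrow M W x R) <=
    P x * KLrow M W x Q + sumR M (fun y => P x * W x y * (Q y / R y - 1))).
  { intros x Hx. destruct (Req_EM_T (P x) 0) as [e|ne].
    - rewrite e. rewrite (sumR_ext _ _ (fun _ => 0)); [rewrite sumR_zero; lra|].
      intros; ring.
    - assert (Hpx : 0 < P x) by (destruct (HP1 x Hx); auto; congruence).
      rewrite (sumR_ext _ _ (fun y => P x * (W x y * (Q y / R y - 1)))) by (intros; ring).
      rewrite sumR_scal, <- Rmult_plus_distr_l. apply Rmult_le_compat_l; [lra|].
      unfold KLrow. rewrite <- sumR_plus. apply sumR_le. intros y Hy.
      destruct (Req_EM_T (W x y) 0) as [ew|nw].
      + rewrite ew. lra.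
      + assert (Hw : 0 < W x y) by (destruct (HW x y Hx Hy); auto; congruence).
        assert (HR : 0 < R y) by (eapply outd_pos; eauto).
        assert (HQ : 0 < Q y) by (eapply outd_pos; eauto; intros; left; auto).
        rewrite !ln_div'; auto.
        pose proof (ln_le_sub1 (Q y / R y)) as Hl.
        rewrite ln_div' in Hl; auto.
        assert (0 < Q y / R y) by (apply Rdiv_lt_0_compat; auto).
        specialize (Hl H).
        assert (W x y * (ln (Q y) - ln (R y)) <= W x y * (Q y / R y - 1)) by
          (apply Rmult_le_compat_l; lra).
        lra. }
  unfold MI. eapply Rle_trans; [apply sumR_le; exact step|].
  rewrite sumR_plus.
  replace (sumR N (fun x => P x * KLrow M W x Q)) with (dI N M W Ps P) by reflexivity.
  assert (sumR N (fun x => sumR M (fun y => P x * W x y * (Q y / R y - 1))) <= 0); [|lra].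
  rewrite sumR_swap.
  rewrite (sumR_ext M _ (fun y => R y * (Q y / R y - 1))).
  2:{ intros y Hy. rewrite (sumR_ext _ _ (fun i => (Q y / R y - 1) * (P i * W i y))) by (intros; ring).
      rewrite sumR_scal, Rmult_comm. reflexivity. }
  eapply Rle_trans. apply (sumR_le M _ (fun y => Q y - R y)).
  - intros y Hy. destruct (Req_EM_T (R y) 0) as [e|ne].
    + rewrite e. assert (0 <= Q y) by (apply (outd_nonneg N M); auto; intros; left; auto). lra.
    + right. field. auto.
  - rewrite sumR_minus. unfold Q, R. rewrite !(outd_sum N M); auto. lra.
Qed.

Lemma lower N M W Ps P : is_channel N M W -> (forall x, (x < N)%nat -> 0 < Ps x) ->
  is_dist N Ps -> is_dist N P ->
  dI N M W Ps P - sumR M (fun y => (outd N W P y - outd N W Ps y)^2 / outd N W Ps y)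
  <= MI N M W P.
Proof.
  intros HC Hpos HPs HP.
  pose proof HC as [HW HS]. pose proof HP as [HP1 HP2].
  set (Q := outd N W Ps). set (R := outd N W P).
  assert (step : forall x, (x < N)%nat ->
    P x * KLrow M W x Q - sumR M (fun y => P x * W x y * (R y / Q y - 1)) <=
    (if Req_EM_T (P x) 0 then 0 else P x * KLrow M W x R)).
  { intros x Hx. destruct (Req_EM_T (P x) 0) as [e|ne].
    - rewrite e. rewrite (sumR_ext _ _ (fun _ => 0)); [rewrite sumR_zero; lra|].
      intros; ring.
    - assert (Hpx : 0 < P x) by (destruct (HP1 x Hx); auto; congruence).
      rewrite (sumR_ext _ _ (fun y => P x * (W x y * (R y / Q y - 1)))) by (intros; ring).
      rewrite sumR_scal, <- Rmult_minus_distr_l. apply Rmult_le_compat_l; [lra|].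
      unfold KLrow. rewrite <- sumR_minus. apply sumR_le. intros y Hy.
      destruct (Req_EM_T (W x y) 0) as [ew|nw].
      + rewrite ew. lra.
      + assert (Hw : 0 < W x y) by (destruct (HW x y Hx Hy); auto; congruence).
        assert (HR : 0 < R y) by (eapply outd_pos; eauto).
        assert (HQ : 0 < Q y) by (eapply outd_pos; eauto; intros; left; auto).
        rewrite !ln_div'; auto.
        pose proof (ln_le_sub1 (R y / Q y)) as Hl.
        rewrite ln_div' in Hl; auto.
        assert (0 < R y / Q y) by (apply Rdiv_lt_0_compat; auto).
        specialize (Hl H).
        assert (W x y * (ln (R y) - ln (Q y)) <= W x y * (R y / Q y - 1)) by
          (apply Rmult_le_compat_l; lra).
        lra. }
  unfold MI. eapply Rle_trans; [|apply sumR_le; exact step].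
  rewrite sumR_minus.
  replace (sumR N (fun x => P x * KLrow M W x Q)) with (dI N M W Ps P) by reflexivity.
  rewrite sumR_swap.
  rewrite (sumR_ext M (fun j => sumR N (fun i => P i * W i j * (R j / Q j - 1))) (fun y => (R y - Q y)^2 / Q y + (R y - Q y))).
  2:{ intros y Hy. transitivity (R y * (R y / Q y - 1)).
      - rewrite (sumR_ext _ _ (fun i => (R y / Q y - 1) * (P i * W i y))) by (intros; ring).
        rewrite sumR_scal, Rmult_comm. reflexivity.
      - destruct (Req_EM_T (Q y) 0) as [e|ne].
        + assert (R y = 0).
          { unfold R, outd. rewrite (sumR_ext _ _ (fun _ => 0)); [apply sumR_zero|].
            intros i Hi. rewrite (outd_zero N M W Ps y); auto. ring. }
          rewrite e, H. unfold Rdiv. ring.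
        + field. auto. }
  rewrite sumR_plus, sumR_minus. unfold Q, R. rewrite !(outd_sum N M); auto. lra.
Qed.

Definition Kc N M W (Ps v : nat -> R) :=
  sumR M (fun y => (outd N W v y)^2 / outd N W Ps y).

Lemma Kc_nonneg N M W Ps v : is_channel N M W -> (forall x, (x < N)%nat -> 0 < Ps x) ->
  0 <= Kc N M W Ps v.
Proof.
  intros HC Hp. unfold Kc. apply sumR_nonneg. intros y Hy.
  assert (0 <= outd N W Ps y) by (apply (outd_nonneg N M); auto; intros; left; auto).
  unfold Rdiv. apply Rmult_le_pos; [apply pow2_ge_0|].
  destruct H as [H|H]; [left; apply Rinv_0_lt_compat; auto|rewrite <- H, Rinv_0; lra].
Qed.

Lemma dI_lin N M W Ps u w l :
  dI N M W Ps (fun x => u x + l * w x) = dI N M W Ps u + l * dI N M W Ps w.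
Proof.
  unfold dI. rewrite <- sumR_scal, <- sumR_plus. apply sumR_ext. intros; ring.
Qed.

Lemma dI_self N M W Ps : (forall x, (x < N)%nat -> 0 < Ps x) ->
  dI N M W Ps Ps = MI N M W Ps.
Proof.
  intros Hp. unfold dI, MI. apply sumR_ext. intros i Hi.
  destruct (Req_EM_T (Ps i) 0); [specialize (Hp i Hi); lra|reflexivity].
Qed.

Lemma expand N M W Ps v t : is_channel N M W -> (forall x, (x < N)%nat -> 0 < Ps x) ->
  is_dist N Ps -> sumR N v = 0 ->
  (forall x, (x < N)%nat -> 0 <= Ps x + t * v x) ->
  MI N M W Ps + t * dI N M W Ps v - t^2 * Kc N M W Ps v
  <= MI N M W (fun x => Ps x + t * v x).
Proof.
  intros HC Hp HPs Hv Ht.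
  assert (Hd : is_dist N (fun x => Ps x + t * v x)).
  { split; auto. rewrite sumR_plus, sumR_scal, Hv. destruct HPs as [_ ->]. ring. }
  pose proof (lower N M W Ps _ HC Hp HPs Hd) as L.
  rewrite dI_lin, dI_self in L; auto.
  replace (sumR M (fun y => (outd N W (fun x => Ps x + t * v x) y - outd N W Ps y) ^ 2 /
        outd N W Ps y)) with (t^2 * Kc N M W Ps v) in L; [lra|].
  unfold Kc. rewrite <- sumR_scal. apply sumR_ext. intros y Hy.
  replace (outd N W (fun x => Ps x + t * v x) y - outd N W Ps y) with (t * outd N W v y).
  - unfold Rdiv. ring.
  - unfold outd. rewrite <- sumR_scal.
    rewrite (sumR_ext N (fun x => (Ps x + t * v x) * W x y)
               (fun x => Ps x * W x y + t * (v x * W x y))) by (intros; ring).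
    rewrite sumR_plus. ring.
Qed.

Lemma improve N M W Ps v c : is_channel N M W -> (forall x, (x < N)%nat -> 0 < Ps x) ->
  is_dist N Ps -> sumR N v = 0 ->
  (dI N M W Ps v > 0 \/ MI N M W Ps > c) -> MI N M W Ps >= c ->
  exists t0, 0 < t0 /\ forall t, 0 < t <= t0 ->
    (forall x, (x < N)%nat -> 0 <= Ps x + t * v x) ->
    MI N M W (fun x => Ps x + t * v x) > c.
Proof.
  intros HC Hp HPs Hv Hcase Hge.
  pose proof (Kc_nonneg N M W Ps v HC Hp) as HK.
  set (K := Kc N M W Ps v) in *. set (d := dI N M W Ps v) in *.
  set (I := MI N M W Ps) in *.
  destruct Hcase as [Hd|Hi].
  - exists (d / (K + 1)). split; [apply Rdiv_lt_0_compat; lra|].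
    intros t [t0 t1] Hpos. pose proof (expand N M W Ps v t HC Hp HPs Hv Hpos) as E.
    fold K d I in E.
    assert (t * (K + 1) <= d).
    { apply (Rmult_le_compat_r (K+1)) in t1; [|lra].
      unfold Rdiv in t1. rewrite Rmult_assoc, Rinv_l in t1; lra. }
    assert (t * K < d) by nra.
    assert (0 < t * d - t^2 * K) by nra. lra.
  - set (delta := I - c).
    exists (Rmin 1 (delta / (Rabs d + K + 1))). split.
    { apply Rmin_case; [lra|]. apply Rdiv_lt_0_compat; [unfold delta; lra|].
      pose proof (Rabs_pos d). lra. }
    intros t [t0 t1] Hpos. pose proof (expand N M W Ps v t HC Hp HPs Hv Hpos) as E.
    fold K d I in E.
    assert (t <= 1) by (eapply Rle_trans; [exact t1|apply Rmin_l]).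
    assert (t2 : t <= delta / (Rabs d + K + 1)) by (eapply Rle_trans; [exact t1|apply Rmin_r]).
    pose proof (Rabs_pos d).
    assert (t * (Rabs d + K + 1) <= delta).
    { apply (Rmult_le_compat_r (Rabs d + K + 1)) in t2; [|lra].
      unfold Rdiv in t2. rewrite Rmult_assoc, Rinv_l in t2; lra. }
    assert (t * d >= - (t * Rabs d)).
    { pose proof (Rle_abs (-d)). rewrite Rabs_Ropp in H2. nra. }
    assert (0 <= t*K*(1-t)) by (apply Rmult_le_pos; [apply Rmult_le_pos|]; lra).
    assert (t^2 * K <= t * K) by (simpl; nra).
    unfold delta in *. nra.
Qed.

Lemma dI_scal N M W Ps v l : dI N M W Ps (fun x => l * v x) = l * dI N M W Ps v.
Proof. unfold dI. rewrite <- sumR_scal. apply sumR_ext. intros; ring. Qed.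

Theorem lemma1 (N M : nat) (W1 W2 : nat -> nat -> R) (Pstar : nat -> R)
  (hW1 : is_channel N M W1) (hW2 : is_channel N M W2)
  (hPd : is_dist N Pstar)
  (hmax : forall P, is_dist N P ->
      Rmin (MI N M W1 P) (MI N M W2 P) <= Rmin (MI N M W1 Pstar) (MI N M W2 Pstar))
  (huniq : forall P, is_dist N P ->
      Rmin (MI N M W1 P) (MI N M W2 P) = Rmin (MI N M W1 Pstar) (MI N M W2 Pstar) ->
      forall x, (x < N)%nat -> P x = Pstar x)
  (hpos : forall x, (x < N)%nat -> 0 < Pstar x)
  (hV1 : 0 < dispersion N M W1 Pstar) (hV2 : 0 < dispersion N M W2 Pstar)
  (hC1 : exists P, is_dist N P /\ MI N M W1 P > Rmin (MI N M W1 Pstar) (MI N M W2 Pstar))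
  (hC2 : exists P, is_dist N P /\ MI N M W2 P > Rmin (MI N M W1 Pstar) (MI N M W2 Pstar)) :
  exists! eta : R, 0 < eta < 1 /\
    forall v : nat -> R, sumR N v = 0 ->
      eta * dI N M W1 Pstar v + (1 - eta) * dI N M W2 Pstar v = 0.
Proof.
  set (I1 := MI N M W1 Pstar) in *. set (I2 := MI N M W2 Pstar) in *.
  set (mn := Rmin I1 I2) in *.
  assert (HI1 : I1 >= mn) by (apply Rle_ge, Rmin_l).
  assert (HI2 : I2 >= mn) by (apply Rle_ge, Rmin_r).
  assert (Hor : I1 = mn \/ I2 = mn) by (unfold mn, Rmin; destruct Rle_dec; auto).
  assert (noimp : forall v, sumR N v = 0 ->
            (dI N M W1 Pstar v > 0 \/ I1 > mn) -> (dI N M W2 Pstar v > 0 \/ I2 > mn) -> False).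
  { intros v Hv H1 H2.
    destruct (improve N M W1 Pstar v mn hW1 hpos hPd Hv H1 HI1) as [t1 [Ht1 F1]].
    destruct (improve N M W2 Pstar v mn hW2 hpos hPd Hv H2 HI2) as [t2 [Ht2 F2]].
    destruct (sumR_min N Pstar hpos) as [m [Hm Hmx]].
    set (B := sumR N (fun x => Rabs (v x))).
    assert (HB : forall x, (x < N)%nat -> Rabs (v x) <= B).
    { intros x Hx. apply (sumR_ge_term N (fun x => Rabs (v x))); auto.
      intros; apply Rabs_pos. }
    assert (HB0 : 0 <= B) by (apply sumR_nonneg; intros; apply Rabs_pos).
    set (tp := m / (B + 1)).
    assert (Htp : 0 < tp) by (apply Rdiv_lt_0_compat; lra).
    set (t := Rmin t1 (Rmin t2 tp)).
    assert (Ht : 0 < t) by (unfold t; repeat apply Rmin_case; lra).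
    assert (Ht1' : t <= t1) by apply Rmin_l.
    assert (Ht2' : t <= t2) by (eapply Rle_trans; [apply Rmin_r|apply Rmin_l]).
    assert (Htp' : t <= tp) by (eapply Rle_trans; [apply Rmin_r|apply Rmin_r]).
    assert (HtB : t * (B + 1) <= m).
    { apply (Rmult_le_compat_r (B+1)) in Htp'; [|lra].
      unfold tp, Rdiv in Htp'. rewrite Rmult_assoc, Rinv_l in Htp'; lra. }
    assert (Hpos : forall x, (x < N)%nat -> 0 <= Pstar x + t * v x).
    { intros x Hx. specialize (HB x Hx). specialize (Hmx x Hx).
      pose proof (Rle_abs (- v x)). rewrite Rabs_Ropp in H.
      assert (t * - v x <= t * B) by (apply Rmult_le_compat_l; lra). nra. }
    specialize (F1 t (conj Ht Ht1') Hpos). specialize (F2 t (conj Ht Ht2') Hpos).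
    assert (Hd : is_dist N (fun x => Pstar x + t * v x)).
    { split; auto. rewrite sumR_plus, sumR_scal, Hv. destruct hPd as [_ ->]. ring. }
    specialize (hmax _ Hd). fold I1 I2 mn in hmax.
    assert (Rmin (MI N M W1 (fun x => Pstar x + t * v x)) (MI N M W2 (fun x => Pstar x + t * v x)) > mn)
      by (apply Rmin_Rgt; auto).
    lra. }
  assert (dirs : forall W, is_channel N M W ->
     (exists P, is_dist N P /\ MI N M W P > mn) ->
     exists u, sumR N u = 0 /\ dI N M W Pstar u > mn - MI N M W Pstar).
  { intros W HW [P [HP HgP]]. exists (fun x => P x + (-1) * Pstar x). split.
    - rewrite sumR_plus, sumR_scal. destruct HP as [_ ->]. destruct hPd as [_ ->]. ring.
    - rewrite dI_lin, dI_self; auto.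
      pose proof (upper N M W Pstar P HW hpos hPd HP). lra. }
  destruct (dirs W1 hW1 hC1) as [u1 [Hu1 Hd1]]. fold I1 in Hd1.
  destruct (dirs W2 hW2 hC2) as [u2 [Hu2 Hd2]]. fold I2 in Hd2.
  assert (E1 : I1 = mn).
  { destruct (Req_dec I1 mn) as [|ne]; auto. exfalso.
    assert (I2 = mn) by (destruct Hor; auto; congruence).
    apply (noimp u2 Hu2); [right; lra|left; lra]. }
  assert (E2 : I2 = mn).
  { destruct (Req_dec I2 mn) as [|ne]; auto. exfalso.
    apply (noimp u1 Hu1); [left; lra|right; lra]. }
  set (a1 := dI N M W1 Pstar u1) in *. set (b1 := dI N M W2 Pstar u1).
  assert (Ha1 : a1 > 0) by lra.
  assert (Hb2 : dI N M W2 Pstar u2 > 0) by lra.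
  assert (Hb1 : b1 < 0).
  { destruct (Rlt_le_dec b1 0) as [|Hle]; auto. exfalso.
    destruct Hle as [Hlt|Heq].
    - apply (noimp u1 Hu1); [left; fold a1; lra|left; fold b1; lra].
    - set (a2 := dI N M W1 Pstar u2).
      set (l := (Rabs a2 + 1) / a1).
      apply (noimp (fun x => u2 x + l * u1 x)).
      + rewrite sumR_plus, sumR_scal, Hu1, Hu2. ring.
      + left. rewrite dI_lin. fold a2 a1.
        replace (l * a1) with (Rabs a2 + 1) by (unfold l; field; lra).
        pose proof (Rle_abs (-a2)). rewrite Rabs_Ropp in H. lra.
      + left. rewrite dI_lin. fold b1. rewrite <- Heq. lra. }
  assert (g : forall v, sumR N v = 0 ->
            a1 * dI N M W2 Pstar v - b1 * dI N M W1 Pstar v <= 0).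
  { intros v Hv. destruct (Rle_lt_dec (a1 * dI N M W2 Pstar v - b1 * dI N M W1 Pstar v) 0)
      as [|Hg]; auto. exfalso.
    set (av := dI N M W1 Pstar v) in *. set (bv := dI N M W2 Pstar v) in *.
    set (l := (- av / a1 + bv / (- b1)) / 2).
    apply (noimp (fun x => v x + l * u1 x)).
    + rewrite sumR_plus, sumR_scal, Hu1, Hv. ring.
    + left. rewrite dI_lin. fold av a1.
      replace (av + l * a1) with ((a1 * bv - b1 * av) / (2 * - b1)) by (unfold l; field; lra).
      apply Rdiv_lt_0_compat; lra.
    + left. rewrite dI_lin. fold bv b1.
      replace (bv + l * b1) with ((a1 * bv - b1 * av) / (2 * a1)) by (unfold l; field; lra).
      apply Rdiv_lt_0_compat; lra. }
  exists (- b1 / (a1 - b1)). split.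
  - split.
    + split.
      * apply Rdiv_lt_0_compat; lra.
      * apply (Rmult_lt_reg_r (a1 - b1)); [lra|].
        unfold Rdiv. rewrite Rmult_assoc, Rinv_l; lra.
    + intros v Hv.
      pose proof (g v Hv) as G1.
      pose proof (g (fun x => (-1) * v x)) as G2.
      rewrite !dI_scal in G2.
      assert (sumR N (fun x => (-1) * v x) = 0) by (rewrite sumR_scal, Hv; ring).
      specialize (G2 H).
      assert (a1 * dI N M W2 Pstar v - b1 * dI N M W1 Pstar v = 0) by lra.
      apply (Rmult_eq_reg_r (a1 - b1)); [|lra].
      field_simplify; [|lra]. lra.
  - intros e [He Hall]. specialize (Hall u1 Hu1). fold a1 b1 in Hall.
    apply (Rmult_eq_reg_r (a1 - b1)); [|lra]. unfold Rdiv. rewrite Rmult_assoc, Rinv_l; [nra|lra].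
Qed.
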